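(* Let $(A,\mu,\alpha,\beta)$ be a BiHom-commutative algebra (with $\mu(a\otimes b)=a\cdot b$). Let $p$ and $r$ be natural numbers and let $D:A\to A$ be a linear map commuting with $\alpha$ and $\beta$ such that $D(a\cdot b)=\beta^r(a)\cdot D(b)+D(a)\cdot\beta^r(b)$ for all $a,b\in A$. Define $a\ast b=\alpha^p(a)\cdot D(b)$. Then $(A,\ast,\alpha^{p+1},\beta^{r+1})$ is a BiHom-Novikov algebra.
   Context: Work over a field. A BiHom-associative algebra is a 4-tuple $(A,\mu,\alpha,\beta)$ with $\alpha,\beta$ commuting linear maps, multiplicative for $\mu$, and $\alpha(x)\cdot(y\cdot z)=(x\cdot y)\cdot\beta(z)$; it is BiHom-commutative if $\beta(a)\cdot\alpha(b)=\beta(b)\cdot\alpha(a)$ for all $a,b$. A BiHom-Novikov algebra is a 4-tuple $(A,\ast,\alpha',\beta')$ with commuting linear maps $\alpha',\beta'$ multiplicative for $\ast$ such that for all $x,y,z$: $(\beta'(x)\ast\alpha'(y))\ast\beta'(z)-\alpha'\beta'(x)\ast(\alpha'(y)\ast z)=(\beta'(y)\ast\alpha'(x))\ast\beta'(z)-\alpha'\beta'(y)\ast(\alpha'(x)\ast z)$ and $(x\ast\beta'(y))\ast\alpha'\beta'(z)=(x\ast\beta'(z))\ast\alpha'\beta'(y)$. *)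

(* Defs.v *)
From HB Require Import structures.
From mathcomp Require Import all_boot all_algebra.
Set Implicit Arguments. Unset Strict Implicit. Unset Printing Implicit Defensive.
Import GRing.Theory.
Local Open Scope ring_scope.

Section BiHom.
Variables (K : fieldType) (A : lmodType K).

Definition lin_map (f : A -> A) : Prop :=
  forall (k : K) (x y : A), f (k *: x + y) = k *: f x + f y.

Definition bilin (m : A -> A -> A) : Prop :=
  (forall (k : K) (x y z : A), m (k *: x + y) z = k *: m x z + m y z) /\
  (forall (k : K) (x y z : A), m x (k *: y + z) = k *: m x y + m x z).

Definition bihom_structure (m : A -> A -> A) (al be : A -> A) : Prop :=
  bilin m /\ lin_map al /\ lin_map be /\
  (forall x, al (be x) = be (al x)) /\
  (forall x y, al (m x y) = m (al x) (al y)) /\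
  (forall x y, be (m x y) = m (be x) (be y)).

Definition BiHomAssociative (m : A -> A -> A) (al be : A -> A) : Prop :=
  bihom_structure m al be /\
  forall x y z, m (al x) (m y z) = m (m x y) (be z).

Definition BiHomCommutativeAlg (m : A -> A -> A) (al be : A -> A) : Prop :=
  BiHomAssociative m al be /\
  forall a b, m (be a) (al b) = m (be b) (al a).

Definition BiHomNovikov (m : A -> A -> A) (al be : A -> A) : Prop :=
  bihom_structure m al be /\
  (forall x y z,
     m (m (be x) (al y)) (be z) - m (al (be x)) (m (al y) z) =
     m (m (be y) (al x)) (be z) - m (al (be y)) (m (al x) z)) /\
  (forall x y z, m (m x (be y)) (al (be z)) = m (m x (be z)) (al (be y))).

End BiHom.

(* Main.v *)
Require Import Defs.
From HB Require Import structures.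
From mathcomp Require Import all_boot all_algebra.
Import GRing.Theory.
Local Open Scope ring_scope.

Lemma iter_comm (T : Type) (f g : T -> T) :
  (forall x, f (g x) = g (f x)) -> forall n x, iter n f (g x) = g (iter n f x).
Proof. by move=> H; elim=> [|n IH] x //=; rewrite IH H. Qed.

Lemma iter_mult (T : Type) (m : T -> T -> T) (f : T -> T) :
  (forall x y, f (m x y) = m (f x) (f y)) ->
  forall n x y, iter n f (m x y) = m (iter n f x) (iter n f y).
Proof. by move=> H; elim=> [|n IH] x y //=; rewrite IH H. Qed.

Lemma iter_lin (K : fieldType) (A : lmodType K) (f : A -> A) :
  lin_map f -> forall n, lin_map (iter n f).
Proof. by move=> H; elim=> [|n IH] k x y //=; rewrite IH H. Qed.

Arguments iter_comm {T f g}.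
Arguments iter_mult {T m f}.

Theorem corollary2p8 (K : fieldType) (A : lmodType K)
  (mu : A -> A -> A) (alpha beta D : A -> A) (p r : nat) :
  BiHomCommutativeAlg mu alpha beta ->
  lin_map D ->
  (forall x, D (alpha x) = alpha (D x)) ->
  (forall x, D (beta x) = beta (D x)) ->
  (forall a b, D (mu a b) = mu (iter r beta a) (D b) + mu (D a) (iter r beta b)) ->
  BiHomNovikov (fun a b => mu (iter p alpha a) (D b))
               (iter p.+1 alpha) (iter r.+1 beta).
Proof.
move=> [[[[bl br] [la [lb [ab [am bm]]]]] assoc] comm] lD Da Db Dmu.
set P := iter p alpha. set R := iter r beta.
have lP : lin_map P by exact: iter_lin.
have lR : lin_map R by exact: iter_lin.
have Pa : forall x, P (alpha x) = alpha (P x) by exact: iter_comm.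
have Pb : forall x, P (beta x) = beta (P x) by apply: iter_comm => x; rewrite ab.
have PD : forall x, D (P x) = P (D x) by move=> x; rewrite /P (iter_comm (fun y => esym (Da y))).
have Ra : forall x, R (alpha x) = alpha (R x) by apply: iter_comm => x; rewrite ab.
have Rb : forall x, R (beta x) = beta (R x) by exact: iter_comm.
have RD : forall x, D (R x) = R (D x) by move=> x; rewrite /R (iter_comm (fun y => esym (Db y))).
have RP : forall x, R (P x) = P (R x).
  by apply: iter_comm => y; rewrite Pb.
have Pm : forall x y, P (mu x y) = mu (P x) (P y) by exact: iter_mult.
have Rm : forall x y, R (mu x y) = mu (R x) (R y) by exact: iter_mult.
have ba : forall x, beta (alpha x) = alpha (beta x) by move=> x; rewrite ab.
have mD : forall x y z, mu x (y + z) = mu x y + mu x z.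
  by move=> x y z; have := br 1 x y z; rewrite !scale1r.
have DD : forall x y, D (x + y) = D x + D y.
  by move=> x y; have := lD 1 x y; rewrite !scale1r.
have iSa : forall n x, iter n.+1 alpha x = alpha (iter n alpha x) by [].
have iSb : forall n x, iter n.+1 beta x = beta (iter n beta x) by [].
rewrite /BiHomNovikov /bihom_structure /bilin.
change (iter p.+1 alpha) with (fun x => alpha (P x)).
change (iter r.+1 beta) with (fun x => beta (R x)).
rewrite -/P -/R in Dmu.
have L2 : forall X u v, mu (mu X (beta u)) (alpha (beta v)) = mu (mu X (beta v)) (alpha (beta u)).
  by move=> X u v; rewrite !ab -!assoc comm.
have L1 : forall u v W, mu (alpha (beta u)) (mu (alpha v) W) = mu (alpha (beta v)) (mu (alpha u) W).
  by move=> u v W; rewrite !assoc comm.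
split; [|split].
- split; first split.
  + by move=> k x y z; rewrite lP bl.
  + by move=> k x y z; rewrite lD br.
  split; first by move=> k x y /=; rewrite lP la.
  split; first by move=> k x y /=; rewrite lR lb.
  split; first by move=> x; (repeat progress rewrite ?Pm ?Rm ?am ?bm ?PD ?RD ?Da ?Db ?RP ?Pa ?Pb ?Ra ?Rb ?ba).
  by split => x y; (repeat progress rewrite ?Pm ?Rm ?am ?bm ?PD ?RD ?Da ?Db ?RP ?Pa ?Pb ?Ra ?Rb ?ba).
- move=> x y z; (repeat progress rewrite ?Pm ?Rm ?am ?bm ?PD ?RD ?Da ?Db ?RP ?Pa ?Pb ?Ra ?Rb ?ba); rewrite !Dmu; (repeat progress rewrite ?Pm ?Rm ?am ?bm ?PD ?RD ?Da ?Db ?RP ?Pa ?Pb ?Ra ?Rb ?ba); rewrite !mD.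
  rewrite (L1 (P (P (R x)))) !assoc.
  have G : forall a b : A, a - (b + a) = - b by move=> a b; rewrite opprD addrCA subrr addr0.
  by rewrite !G.
- by move=> x y z; (repeat progress rewrite ?Pm ?Rm ?am ?bm ?PD ?RD ?Da ?Db ?RP ?Pa ?Pb ?Ra ?Rb ?ba); rewrite L2.
Qed.
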